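(* Let $T$ be a $C_{p^rq^s}$-transfer system with exactly two connected components. If the connected component of $(0,0)$ equals $L_{(\ell,k)}$ for some $\ell<r$ and $k<s$, then $T$ is not lesser simply paired.
   Context: $p,q$ are distinct primes and $r,s\ge 0$ integers. The subgroups of $C_{p^rq^s}$ are identified with grid points $(i,j)$, $0\le i\le r$, $0\le j\le s$, where $(i,j)$ stands for $C_{p^iq^j}$ (intersection is coordinatewise minimum). A $C_{p^rq^s}$-transfer system is a partial order $\to$ on these vertices such that: $(i_1,j_1)\to(i_2,j_2)$ implies $i_1\le i_2$, $j_1\le j_2$; it is reflexive and transitive; and $(i_1,j_1)\to(i_2,j_2)$ implies $(\min\{i_1,a\},\min\{j_1,b\})\to(\min\{i_2,a\},\min\{j_2,b\})$ for every vertex $(a,b)$. Connected components are those of the underlying undirected graph. $L_{(\ell,k)}=\{(i,j): 0\le i\le\ell,\ 0\le j\le s\}\cup\{(i,j): 0\le i\le r,\ 0\le j\le k\}$. A transfer system is saturated if whenever $L\le K\le H$ and $L\to H$ is in it then $K\to H$ is in it; $\mathrm{Hull}(T)$ is the smallest saturated transfer system containing $T$; $T_c$ is the complete transfer system. A pair $(T,T')$ is compatible if $T\subseteq T'$ and for all subgroups $A,B,C$ with $B,C\le A$: if $B\to A$ is in $T$ and $B\cap C\to B$ is in $T'$ then $C\to A$ is in $T'$. $T$ is lesser simply paired if for every transfer system $T'\supseteq T$, $(T,T')$ is compatible iff $T'\in\{\mathrm{Hull}(T),T_c\}$. *)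

(* Defs.v *)
From mathcomp Require Import all_boot.
Set Implicit Arguments. Unset Strict Implicit. Unset Printing Implicit Defensive.

(* Vertices (i,j), 0 <= i <= r, 0 <= j <= s; (i,j) stands for C_{p^i q^j}. *)
Definition vert (r s : nat) : finType := ('I_r.+1 * 'I_s.+1)%type.

(* subgroup inclusion: coordinatewise order *)
Definition vle (r s : nat) (x y : vert r s) : bool :=
  (x.1 <= y.1)%N && (x.2 <= y.2)%N.

(* intersection: coordinatewise minimum *)
Definition vmeet (r s : nat) (x y : vert r s) : vert r s :=
  (inord (minn x.1 y.1), inord (minn x.2 y.2)).

Definition is_transfer (r s : nat) (T : rel (vert r s)) : Prop :=
  [/\ (forall x y, T x y -> vle x y),
      (forall x, T x x),
      (forall x y z, T x y -> T y z -> T x z) &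
      (forall x y a, T x y -> T (vmeet x a) (vmeet y a))].

Definition saturated (r s : nat) (T : rel (vert r s)) : Prop :=
  forall L K H, vle L K -> vle K H -> T L H -> T K H.

Definition complete_ts (r s : nat) : rel (vert r s) := fun x y => vle x y.

Definition subts (r s : nat) (T T' : rel (vert r s)) : Prop :=
  forall x y, T x y -> T' x y.

Definition eqts (r s : nat) (T T' : rel (vert r s)) : Prop :=
  forall x y, T x y = T' x y.

Definition is_hull (r s : nat) (T H : rel (vert r s)) : Prop :=
  [/\ is_transfer H, saturated H, subts T H &
      forall S, is_transfer S -> saturated S -> subts T S -> subts H S].

Definition compatible (r s : nat) (T T' : rel (vert r s)) : Prop :=
  subts T T' /\
  forall A B C : vert r s, vle B A -> vle C A ->
    T B A -> T' (vmeet B C) B -> T' C A.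

Definition lesser_simply_paired (r s : nat) (T : rel (vert r s)) : Prop :=
  forall T', is_transfer T' -> subts T T' ->
    (compatible T T' <-> (is_hull T T' \/ eqts T' (@complete_ts r s))).

Definition undirected (r s : nat) (T : rel (vert r s)) : rel (vert r s) :=
  fun x y => T x y || T y x.

Definition origin (r s : nat) : vert r s := (ord0, ord0).

Definition inL (r s l k : nat) (v : vert r s) : bool :=
  (v.1 <= l)%N || (v.2 <= k)%N.

(* Main.v *)
Require Import Defs.
From mathcomp Require Import all_boot.
From mathcomp Require Import zify.
Set Implicit Arguments. Unset Strict Implicit.

Lemma key (x1 x2 y1 y2 a1 a2 l k : nat): x1<=y1 -> x2<=y2 ->
  ((x1<=l)||(x2<=k)) = ((y1<=l)||(y2<=k)) ->
  ((minn x1 a1 <= l)||(minn x2 a2<=k)) = ((minn y1 a1 <= l)||(minn y2 a2 <= k)).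
Proof.
move=> h1 h2; rewrite !geq_min.
case: (leqP x1 l) => ?; case: (leqP x2 k) => ?; case: (leqP y1 l) => ?;
case: (leqP y2 k) => ?; case: (leqP a1 l) => ?; case: (leqP a2 k) => ? //=; lia.
Qed.

Lemma meet1 r s (x a : vert r s) : ((vmeet x a).1 : nat) = minn x.1 a.1.
Proof. by rewrite /vmeet /= inordK // (leq_ltn_trans (geq_minl _ _)). Qed.
Lemma meet2 r s (x a : vert r s) : ((vmeet x a).2 : nat) = minn x.2 a.2.
Proof. by rewrite /vmeet /= inordK // (leq_ltn_trans (geq_minl _ _)). Qed.

Lemma eq_origin r s (x : vert r s) :
  (x == origin r s) = ((x.1 : nat) == 0) && ((x.2 : nat) == 0).
Proof. by case: x => a b; rewrite /origin xpair_eqE. Qed.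

Lemma inL_down r s l k (x y : vert r s) : vle x y -> inL l k y -> inL l k x.
Proof. rewrite /vle /inL => /andP [h1 h2] /orP [] h; apply/orP; lia. Qed.

Definition SC {r s} l k : rel (vert r s) :=
  fun x y => vle x y && (inL l k x == inL l k y).
Definition T3 {r s} l k : rel (vert r s) :=
  fun x y => vle x y && ((inL l k x == inL l k y) || (x == origin r s)).

Lemma vle_trans r s (x y z : vert r s) : vle x y -> vle y z -> vle x z.
Proof. rewrite /vle => /andP [? ?] /andP [? ?]; apply/andP; lia. Qed.

Lemma vle_meet r s (x y a : vert r s) : vle x y -> vle (vmeet x a) (vmeet y a).
Proof. rewrite /vle !meet1 !meet2 => /andP [? ?]; apply/andP; lia. Qed.

Lemma inL_meet r s l k (x y a : vert r s) : vle x y -> inL l k x = inL l k y ->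
  inL l k (vmeet x a) = inL l k (vmeet y a).
Proof.
rewrite /vle /inL !meet1 !meet2 => /andP [? ?] E; exact: key.
Qed.

Lemma SC_transfer r s l k : is_transfer (SC l k : rel (vert r s)).
Proof.
split.
- by move=> x y /andP [].
- by move=> x; rewrite /SC /vle !leqnn eqxx.
- move=> x y z /andP [h1 /eqP e1] /andP [h2 /eqP e2]; rewrite /SC (vle_trans h1 h2).
  by rewrite e1 e2 eqxx.
- move=> x y a /andP [h /eqP e]; rewrite /SC vle_meet //.
  by rewrite (inL_meet a h e) eqxx.
Qed.

Lemma SC_sat r s l k : saturated (SC l k : rel (vert r s)).
Proof.
move=> L K H hLK hKH /andP [_ /eqP e]; rewrite /SC hKH /=.
case hH: (inL l k H).
- by rewrite (inL_down hKH hH).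
- case hK: (inL l k K) => //.
  by move: e; rewrite hH (inL_down hLK hK).
Qed.

Lemma T3_transfer r s l k : is_transfer (T3 l k : rel (vert r s)).
Proof.
split.
- by move=> x y /andP [].
- by move=> x; rewrite /T3 /vle !leqnn eqxx.
- move=> x y z /andP [h1 e1] /andP [h2 e2]; rewrite /T3 (vle_trans h1 h2) /=.
  case/orP: e1 => [/eqP e1|->]; last by rewrite orbT.
  case/orP: e2 => [/eqP e2|e2]; first by rewrite e1 e2 eqxx.
  move: h1; rewrite /vle; move: e2; rewrite eq_origin => /andP [/eqP a /eqP b].
  rewrite a b => /andP [c d]; apply/orP; right; rewrite eq_origin; apply/andP; lia.
- move=> x y a /andP [h e]; rewrite /T3 vle_meet //=.
  case/orP: e => [/eqP e|e]; first by rewrite (inL_meet a h e) eqxx.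
  apply/orP; right; move: e; rewrite !eq_origin !meet1 !meet2 => /andP [/eqP -> /eqP ->].
  by rewrite !min0n.
Qed.

Theorem mainTheorem15 (p q r s : nat) (T : rel (vert r s)) (l k : nat) :
  prime p -> prime q -> p != q ->
  is_transfer T ->
  n_comp (undirected T) predT = 2 ->
  (l < r)%N -> (k < s)%N ->
  (forall v, connect (undirected T) (origin r s) v = inL l k v) ->
  ~ lesser_simply_paired T.
Proof.
move=> _ _ _ [Tle Trefl Ttrans Trestr] _ lr ks Hconn HLSP.
have sym : connect_sym (undirected T).
  by apply: sym_connect_sym => x y; rewrite /undirected orbC.
have Tcomp : forall x y, T x y -> inL l k x = inL l k y.
  move=> x y Txy; rewrite -!Hconn.
  have cxy : connect (undirected T) x y by apply: connect1; rewrite /undirected Txy.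
  apply/idP/idP => H; first exact: connect_trans H cxy.
  by apply: connect_trans H _; rewrite sym.
have TsubSC : subts T (SC l k).
  by move=> x y Txy; rewrite /SC Tle //= (Tcomp _ _ Txy) eqxx.
have TsubT3 : subts T (T3 l k).
  by move=> x y Txy; rewrite /T3 Tle //= (Tcomp _ _ Txy) eqxx.
have comp : compatible T (T3 l k).
  split => // A B C hBA hCA TBA /andP [hm e].
  rewrite /T3 hCA /=.
  have eBA := Tcomp _ _ TBA.
  have hmC : vle (vmeet B C) C.
    by rewrite /vle meet1 meet2; apply/andP; lia.
  case/orP: e => [/eqP e|e].
    apply/orP; left.
    case hA: (inL l k A); first by rewrite (inL_down hCA hA).
    case hC: (inL l k C) => //.
    by move: (inL_down hmC hC); rewrite e eBA hA.
  case hA: (inL l k A); first by rewrite (inL_down hCA hA).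
  apply/orP; right.
  move: e hA; rewrite -eBA !eq_origin meet1 meet2 /inL => /andP [/eqP a /eqP b].
  move/negbT; rewrite negb_or -!ltnNge => /andP [c d].
  apply/andP; lia.
have [H|H] := (HLSP (T3 l k) (@T3_transfer r s l k) TsubT3).1 comp.
- case: H => _ _ _ /(_ (SC l k) (@SC_transfer r s l k) (@SC_sat r s l k) TsubSC) sub.
  have top : T3 l k (origin r s) (ord_max, ord_max).
    by rewrite /T3 /vle /= eqxx !orbT.
  move: (sub _ _ top); rewrite /SC /inL /=.
  have -> : (r <= l) = false by lia.
  by have -> : (s <= k) = false by lia.
- have s1 : 1 < s.+1 by lia.
  move: (H (ord0, Ordinal s1) (ord_max, ord_max)).
  rewrite /T3 /complete_ts /vle /=.
  have -> : (0 < s) by lia.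
  rewrite /= /inL /=.
  have -> : (r <= l) = false by lia.
  have -> : (s <= k) = false by lia.
  by rewrite eq_origin.
Qed.
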